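(* Suppose (i) the initial sketch $P$ provided by the user satisfies $P\xRightarrow{*}\bar{P}^*$, and (ii) the user responses are $\mathcal{O}(Q)=\mathbb{I}[Q\xRightarrow{*}\bar{P}^*]$. Then, if the interactive synthesis algorithm terminates, it returns $\bar{P}^*$.
   Context: Setting: a DSL of database queries given by a context-free grammar with select, project and inner-join operations; holes are either tables in a sequence of inner-joins (nonterminal $I$) or columns (nonterminal $C$). A sketch is a sequence derivable from the start symbol; $\alpha\xRightarrow{*}\alpha'$ means $\alpha'$ is derivable from $\alpha$ (i.e., $\alpha'$ is a refinement of $\alpha$); a completion is a refinement with no holes. $\bar{P}^*$ denotes the true (user-intended) complete program. The interactive synthesis algorithm keeps a current sketch $P$ (initialized to the user's sketch) and a set $\mathcal{N}$ of rejected questions; while $P$ has holes, it forms candidate questions (refinements of $P$ obtained by filling one hole, and all holes sharing its name, with either a column $c_i$, a table $t_i$, or $t_i\Join_{C,C}I$), removes those in $\mathcal{N}$, picks one question $\hat Q$ (via sampled completions), asks the user oracle $\mathcal{O}(\hat Q)\in\{\mathsf{true},\mathsf{false}\}$, and sets $P\gets\hat Q$ if true, else adds $\hat Q$ to $\mathcal{N}$. It returns $P$ once $P$ is complete. $\mathbb{I}$ is the indicator function. *)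

(* Defs.v *)
From Stdlib Require Import Relation_Operators List.
From mathcomp Require Import all_boot.
Set Implicit Arguments.
Unset Strict Implicit.
Unset Printing Implicit Defensive.

(* Symbols of a sketch: terminals, or named holes (nonterminal + name). *)
Inductive sym (Tm NT : Type) : Type :=
| Term of Tm
| Hole of NT & nat.
Arguments Term {Tm NT}.
Arguments Hole {Tm NT}.

Inductive gsym (Tm NT : Type) : Type :=
| GT of Tm
| GN of NT.
Arguments GT {Tm NT}.
Arguments GN {Tm NT}.

Definition sketch (Tm NT : Type) := seq (sym Tm NT).

Section Model.
Variables (Tm : Type) (NT : eqType).
Variable production : NT -> seq (gsym Tm NT) -> Prop.

Inductive instance : seq (gsym Tm NT) -> sketch Tm NT -> Prop :=
| inst_nil : instance [::] [::]
| inst_T t r s : instance r s -> instance (GT t :: r) (Term t :: s)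
| inst_N n h r s : instance r s -> instance (GN n :: r) (Hole n h :: s).

Definition derive_step (a b : sketch Tm NT) : Prop :=
  exists (l r : sketch Tm NT) (N : NT) (h : nat) rhs (s : sketch Tm NT),
    [/\ production N rhs, instance rhs s,
        a = l ++ Hole N h :: r & b = l ++ s ++ r].

Definition derives : sketch Tm NT -> sketch Tm NT -> Prop :=
  @clos_refl_trans (sketch Tm NT) derive_step.

Definition has_hole (P : sketch Tm NT) : Prop :=
  exists N h, Stdlib.Lists.List.In (Hole N h) P.

Definition complete (P : sketch Tm NT) : Prop := ~ has_hole P.

Definition is_hole (N : NT) (h : nat) (x : sym Tm NT) : bool :=
  match x with Hole N' h' => (N' == N) && (h' == h) | Term _ => false end.

Definition fill (N : NT) (h : nat) (s : sketch Tm NT) (P : sketch Tm NT) :=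
  flatten (map (fun x => if is_hole N h x then s else [:: x]) P).

(* candidate questions: fill one hole (and all holes sharing its name)
   using one production of its nonterminal *)
Definition candidate (P Q : sketch Tm NT) : Prop :=
  exists N h rhs s,
    [/\ Stdlib.Lists.List.In (Hole N h) P, production N rhs, instance rhs s &
        Q = fill N h s P].

(* one iteration of the while loop on the state (P, rejected set);
   the choice of the question among candidates not yet rejected is left
   arbitrary (it models the sampling-based selection). *)
Inductive alg_step (O : sketch Tm NT -> bool) :
  sketch Tm NT * seq (sketch Tm NT) -> sketch Tm NT * seq (sketch Tm NT) -> Prop :=
| step_accept P Nr Q :
    has_hole P -> candidate P Q -> ~ Stdlib.Lists.List.In Q Nr -> O Q = true ->
    alg_step O (P, Nr) (Q, Nr)
| step_reject P Nr Q :
    has_hole P -> candidate P Q -> ~ Stdlib.Lists.List.In Q Nr -> O Q = false ->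
    alg_step O (P, Nr) (P, Q :: Nr).

Definition alg_returns (O : sketch Tm NT -> bool) (P Pf : sketch Tm NT) : Prop :=
  exists Nf, clos_refl_trans _ (alg_step O) (P, [::]) (Pf, Nf) /\ complete Pf.

End Model.

(* Main.v *)
Require Import Defs.
From Stdlib Require Import Relation_Operators Operators_Properties List.
From mathcomp Require Import all_boot.

Lemma inv_steps (Tm : Type) (NT : eqType)
  (production : NT -> seq (gsym Tm NT) -> Prop) (Pstar : sketch Tm NT)
  (O : sketch Tm NT -> bool) :
  (forall Q, O Q = true <-> derives production Q Pstar) ->
  forall a b, clos_refl_trans _ (alg_step production O) a b ->
  derives production a.1 Pstar -> derives production b.1 Pstar.
Proof.
  move=> HO a b H; elim: H => //=.
  - move=> x y []; simpl => // P Nr Q _ _ _ HQ _; exact/HO.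
  - move=> x y z _ IH1 _ IH2 H; exact: IH2 (IH1 H).
Qed.

Lemma complete_derives (Tm : Type) (NT : eqType)
  (production : NT -> seq (gsym Tm NT) -> Prop) (a b : sketch Tm NT) :
  complete a -> derives production a b -> a = b.
Proof.
  move=> Hc H; apply clos_rt_rt1n in H; inversion H as [|x y Hs]; first by [].
  subst.
  exfalso; apply: Hc.
  case: Hs => l [r [N [h [rhs [s [_ _ Ha _]]]]]].
  exists N, h; rewrite Ha; apply in_or_app; right; left; reflexivity.
Qed.

Theorem theorem1 (Tm : Type) (NT : eqType)
  (production : NT -> seq (gsym Tm NT) -> Prop) (S : NT) (h0 : nat)
  (P Pstar : sketch Tm NT) (O : sketch Tm NT -> bool) :
  derives production [:: Hole S h0] P ->
  complete Pstar ->
  derives production P Pstar ->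
  (forall Q, O Q = true <-> derives production Q Pstar) ->
  forall Pf, alg_returns production O P Pf -> Pf = Pstar.
Proof.
  move=> _ _ HP HO Pf [Nf [Hr Hc]].
  have := @inv_steps Tm NT production Pstar O HO _ _ Hr HP => /= Hd.
  exact: complete_derives Hc Hd.
Qed.
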